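(* Let $M,N\ge 0$ be integers, $a_0,\dots,a_M\in\mathbb{R}$, $f_M(x)=\sum_{m=0}^M a_mT_m(x)$. For $0\le n\le N$ and $y\in[-1,1]$ let $\tilde R_n(y)=\int_{-1}^{y}f_M(y-1-t)T_n(t)\,\mathrm{d}t=\sum_{k=0}^{M+N+1}R_{k,n}T_k(y)$, and set $R_{M+N+2,n}:=0$. For $k\ge1$ let $\varepsilon_k=2$ if $k=1$ and $\varepsilon_k=1$ if $k\ge 2$. Then for every $1\le k\le M+N$: $$R_{k,1}=-R_{k,0}+\frac{\varepsilon_k}{2k}R_{k-1,0}-\frac{1}{2k}R_{k+1,0}\qquad(\text{if } N\ge1),$$ $$R_{k,2}=R_{k,0}+\frac{2\varepsilon_k}{k}R_{k-1,1}-\frac{2}{k}R_{k+1,1}\qquad(\text{if } N\ge2),$$ and for $2\le n\le N-1$, $$R_{k,n+1}=\frac{2(-1)^n}{n-1}R_{k,0}+\frac{n+1}{n-1}R_{k,n-1}+\frac{\varepsilon_k(n+1)}{k}R_{k-1,n}-\frac{n+1}{k}R_{k+1,n}.$$ Moreover, for every $1\le n\le N$, $$R_{0,n}=\sum_{j=1}^{M+n+1}(-1)^{j+1}R_{j,n}.$$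
   Context: $T_m(x)=\cos(m\arccos x)$ is the $m$-th Chebyshev polynomial. Each $\tilde R_n$ is a polynomial of degree at most $M+n+1$, so $R_{k,n}=0$ for $k>M+n+1$; $R$ is the $(M+N+2)\times(N+1)$ Chebyshev convolution matrix of $f_M$. *)

(* Defs.v *)
From Stdlib Require Import Reals Lra Lia.
From Coquelicot Require Import Coquelicot.
Open Scope R_scope.

Definition T (m : nat) (x : R) : R := cos (INR m * acos x).

Definition fM (M : nat) (a : nat -> R) (x : R) : R :=
  sum_f_R0 (fun m => a m * T m x) M.

Definition Rtilde (M : nat) (a : nat -> R) (n : nat) (y : R) : R :=
  RInt (fun t => fM M a (y - 1 - t) * T n t) (-1) y.

Definition eps (k : nat) : R := if Nat.eqb k 1 then 2 else 1.

(* Main.v *)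
Require Import Defs.
From Stdlib Require Import Reals.
From Coquelicot Require Import Coquelicot.
From Stdlib Require Import Lra Lia Wf_nat.
Open Scope R_scope.


Fixpoint Tp (n : nat) (x : R) : R :=
  match n with
  | O => 1
  | S O => x
  | S ((S m) as p) => 2 * x * Tp p x - Tp m x
  end.

Fixpoint Up (n : nat) (x : R) : R :=
  match n with
  | O => 1
  | S O => 2 * x
  | S ((S m) as p) => 2 * x * Up p x - Up m x
  end.

Definition dTp (n : nat) (x : R) : R := INR n * Up (pred n) x.

Lemma Tp_SS n x : Tp (S (S n)) x = 2 * x * Tp (S n) x - Tp n x.
Proof. reflexivity. Qed.
Lemma Up_SS n x : Up (S (S n)) x = 2 * x * Up (S n) x - Up n x.
Proof. reflexivity. Qed.

Lemma two_step (P : nat -> Prop) : P O -> P 1%nat -> (forall n, P n -> P (S n) -> P (S (S n))) -> forall n, P n.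
Proof.
  intros H0 H1 HS n. assert (P n /\ P (S n)) as [H _]; [|exact H].
  induction n as [|n [IH1 IH2]]; [split; auto| split; auto].
Qed.

Lemma Tp_Up n x : Tp (S n) x = Up (S n) x - x * Up n x.
Proof.
  revert n; apply two_step; [simpl; ring | simpl; ring |].
  intros n IH1 IH2. rewrite Tp_SS, IH1, IH2, !Up_SS. ring.
Qed.

Lemma Up_Tp n x : Up (S (S n)) x - Up n x = 2 * Tp (S (S n)) x.
Proof. rewrite Tp_Up, Up_SS. ring. Qed.

Lemma Tp_cos n t : Tp n (cos t) = cos (INR n * t).
Proof.
  revert n; apply two_step.
  - simpl. rewrite Rmult_0_l, cos_0. reflexivity.
  - simpl. rewrite Rmult_1_l. reflexivity.
  - intros n IH1 IH2. rewrite Tp_SS, IH1, IH2.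
    replace (INR (S (S n)) * t) with (INR (S n) * t + t) by (rewrite !S_INR; ring).
    replace (INR n * t) with (INR (S n) * t - t) by (rewrite !S_INR; ring).
    rewrite cos_plus, cos_minus. ring.
Qed.

Lemma Up_sin n t : Up n (cos t) * sin t = sin (INR (S n) * t).
Proof.
  revert n; apply two_step.
  - simpl. rewrite Rmult_1_l, Rmult_1_l. reflexivity.
  - simpl. replace ((1+1)*t) with (t+t) by ring. rewrite sin_plus. ring.
  - intros n IH1 IH2. rewrite Up_SS.
    replace ((2 * cos t * Up (S n) (cos t) - Up n (cos t)) * sin t) with
      (2 * cos t * (Up (S n) (cos t) * sin t) - Up n (cos t) * sin t) by ring.
    rewrite IH1, IH2.
    replace (INR (S (S (S n))) * t) with (INR (S (S n)) * t + t) by (rewrite !S_INR; ring).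
    replace (INR (S n) * t) with (INR (S (S n)) * t - t) by (rewrite !S_INR; ring).
    rewrite sin_plus, sin_minus. ring.
Qed.

Lemma dTp_sin n t : dTp n (cos t) * sin t = INR n * sin (INR n * t).
Proof.
  destruct n as [|n]; unfold dTp; simpl pred.
  - simpl. ring.
  - rewrite Rmult_assoc, Up_sin. reflexivity.
Qed.

Lemma Tp_m1 n : Tp n (-1) = (-1) ^ n.
Proof.
  revert n; apply two_step; [reflexivity| simpl; ring|].
  intros n IH1 IH2. rewrite Tp_SS, IH1, IH2. simpl. ring.
Qed.

Lemma T_Tp n x : -1 <= x <= 1 -> T n x = Tp n x.
Proof.
  intros Hx. unfold T. rewrite <- (cos_acos x Hx) at 2. rewrite Tp_cos. reflexivity.
Qed.

Lemma Tp_deriv n x : is_derive (Tp n) x (dTp n x).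
Proof.
  revert n; apply two_step.
  - unfold dTp. simpl. replace (0 * 1) with 0 by ring. apply (is_derive_const 1).
  - unfold dTp. simpl. replace (1 * 1) with 1 by ring.
    apply is_derive_ext with (f := fun x => x); [reflexivity|]. apply (@is_derive_id R_AbsRing).
  - intros n IH1 IH2.
    assert (H2 : is_derive (fun x : R => 2 * x) x 2).
    { pose proof (is_derive_scal (fun x => x) x 2 1 (@is_derive_id R_AbsRing x)) as H.
      rewrite Rmult_1_r in H. exact H. }
    assert (Hm : is_derive (fun x => 2 * x * Tp (S n) x) x (2 * Tp (S n) x + 2 * x * dTp (S n) x)).
    { pose proof (is_derive_mult (fun x : R => 2 * x) (Tp (S n)) x _ _ H2 IH2 Rmult_comm) as H.
      exact H. }
    pose proof (is_derive_minus _ _ _ _ _ Hm IH1) as H.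
    apply is_derive_ext with (g := Tp (S (S n))) in H. 2: intros t; reflexivity.
    assert (Heq : dTp (S (S n)) x = (2 * Tp (S n) x + 2 * x * dTp (S n) x) - dTp n x).
    { unfold dTp. simpl pred. destruct n as [|n].
      * simpl. ring.
      * simpl pred. rewrite Tp_Up, !Up_SS. rewrite !S_INR. ring. }
    rewrite Heq. exact H.
Qed.

Definition Sp (K : nat) (c : nat -> R) (y : R) : R := sum_f_R0 (fun k => c k * Tp k y) K.
Definition dSp (K : nat) (c : nat -> R) (y : R) : R := sum_f_R0 (fun k => c k * dTp k y) K.

Lemma Sp_deriv K c y : is_derive (Sp K c) y (dSp K c y).
Proof.
  induction K as [|K IH].
  - unfold Sp, dSp; simpl.
    apply (is_derive_ext (fun y => c 0%nat * Tp 0 y)). intros; reflexivity.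
    apply is_derive_scal. apply Tp_deriv.
  - assert (H1 : is_derive (fun y => c (S K) * Tp (S K) y) y (c (S K) * dTp (S K) y)).
    { apply is_derive_scal. apply Tp_deriv. }
    pose proof (is_derive_plus _ _ _ _ _ IH H1) as H.
    apply (is_derive_ext _ (Sp (S K) c)) in H. 2: intros t; reflexivity.
    exact H.
Qed.

Lemma cont_Tp n x : continuous (Tp n) x.
Proof. apply (@ex_derive_continuous R_AbsRing R_NormedModule). eexists. apply Tp_deriv. Qed.

Lemma cont_Up n x : continuous (Up n) x.
Proof.
  revert n; apply two_step.
  - apply continuous_const.
  - apply (continuous_ext (fun x => 2 * x)). intros; reflexivity.
    apply (@ex_derive_continuous R_AbsRing R_NormedModule). auto_derive. auto.
  - intros n IH1 IH2.
    apply (continuous_ext (fun x => minus (mult (2 * x) (Up (S n) x)) (Up n x))).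
    intros; reflexivity.
    apply (@continuous_minus R_UniformSpace R_AbsRing R_NormedModule); [|exact IH1].
    apply (@continuous_mult R_UniformSpace R_AbsRing); [|exact IH2].
    apply (@ex_derive_continuous R_AbsRing R_NormedModule). auto_derive. auto.
Qed.

Lemma cont_dTp n x : continuous (dTp n) x.
Proof.
  unfold dTp. apply (continuous_ext (fun x => mult (INR n) (Up (pred n) x))).
  intros; reflexivity.
  apply (@continuous_mult R_UniformSpace R_AbsRing). apply continuous_const. apply cont_Up.
Qed.

Lemma cont_Sp K c x : continuous (Sp K c) x.
Proof. apply (@ex_derive_continuous R_AbsRing R_NormedModule). eexists. apply Sp_deriv. Qed.

Lemma cont_dSp K c x : continuous (dSp K c) x.
Proof.
  induction K as [|K IH].
  - unfold dSp; simpl. apply (continuous_ext (fun x => mult (c 0%nat) (dTp 0 x))).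
    intros; reflexivity. apply (@continuous_mult R_UniformSpace R_AbsRing). apply continuous_const. apply cont_dTp.
  - apply (continuous_ext (fun x => plus (dSp K c x) (mult (c (S K)) (dTp (S K) x)))).
    intros; reflexivity. apply (@continuous_plus R_UniformSpace R_AbsRing R_NormedModule). exact IH.
    apply (@continuous_mult R_UniformSpace R_AbsRing). apply continuous_const. apply cont_dTp.
Qed.

Lemma cont_pt f x : continuous f x -> continuity_pt f x.
Proof. intros H. apply continuity_pt_filterlim. exact H. Qed.

Lemma dTp_rel0 t : dTp 1 t = Tp 0 t.
Proof. unfold dTp; simpl. ring. Qed.
Lemma dTp_rel1 t : dTp 2 t = 4 * Tp 1 t.
Proof. unfold dTp; simpl. ring. Qed.
Lemma dTp_rel n t : (2 <= n)%nat ->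
  dTp (S n) t = (INR n + 1) / (INR n - 1) * dTp (n - 1) t + 2 * (INR n + 1) * Tp n t.
Proof.
  intros Hn. destruct n as [|[|n]]; try lia.
  unfold dTp. replace (S (S n) - 1)%nat with (S n) by lia. simpl pred.
  pose proof (Up_Tp n t) as HU.
  replace (Tp (S (S n)) t) with ((Up (S (S n)) t - Up n t) / 2) by lra. rewrite !S_INR.
  assert (0 <= INR n) by apply pos_INR.
  field. lra.
Qed.

Lemma dTp0 t : dTp 0 t = 0.
Proof. unfold dTp; simpl; ring. Qed.

Definition Gg (M : nat) (a : nat -> R) (h : R -> R) (y : R) : R :=
  RInt (fun t => Sp M a (y - 1 - t) * h t) (-1) y.


Lemma Sp_comp_t M a y t : is_derive (fun t => Sp M a (y - 1 - t)) t (- dSp M a (y - 1 - t)).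
Proof.
  pose proof (@is_derive_comp R_AbsRing R_NormedModule (Sp M a) (fun t => y - 1 - t) t _ (-1)
     (Sp_deriv M a (y - 1 - t))) as H.
  assert (Hg : is_derive (fun t : R => y - 1 - t) t (-1)). { auto_derive; [auto| ring]. }
  specialize (H Hg). replace (- dSp M a (y - 1 - t)) with (scal (-1) (dSp M a (y - 1 - t))).
  exact H. unfold scal; simpl; unfold mult; simpl. ring.
Qed.

Lemma Sp_comp_u M a u t : is_derive (fun u => Sp M a (u - 1 - t)) u (dSp M a (u - 1 - t)).
Proof.
  pose proof (@is_derive_comp R_AbsRing R_NormedModule (Sp M a) (fun u => u - 1 - t) u _ 1
     (Sp_deriv M a (u - 1 - t))) as H.
  assert (Hg : is_derive (fun u : R => u - 1 - t) u 1). { auto_derive; [auto| ring]. }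
  specialize (H Hg). replace (dSp M a (u - 1 - t)) with (scal 1 (dSp M a (u - 1 - t))).
  exact H. unfold scal; simpl; unfold mult; simpl. ring.
Qed.

Lemma cont_lin y x : continuous (fun t : R => y - 1 - t) x.
Proof. apply (@ex_derive_continuous R_AbsRing R_NormedModule). auto_derive. auto. Qed.

Lemma cont_integrand M a h y x : (forall t, continuous h t) ->
  continuous (fun t => Sp M a (y - 1 - t) * h t) x.
Proof.
  intros Hh.
  apply (continuous_ext (fun t => mult (Sp M a (y - 1 - t)) (h t))). intros; reflexivity.
  apply (@continuous_mult R_UniformSpace R_AbsRing); [|apply Hh].
  apply (continuous_comp (fun t : R => y - 1 - t) (Sp M a)). apply cont_lin. apply cont_Sp.
Qed.

Lemma cont_integrand' M a h y x : (forall t, continuous h t) ->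
  continuous (fun t => dSp M a (y - 1 - t) * h t) x.
Proof.
  intros Hh.
  apply (continuous_ext (fun t => mult (dSp M a (y - 1 - t)) (h t))). intros; reflexivity.
  apply (@continuous_mult R_UniformSpace R_AbsRing); [|apply Hh].
  apply (continuous_comp (fun t : R => y - 1 - t) (dSp M a)). apply cont_lin. apply cont_dSp.
Qed.

Lemma exRInt_integrand M a h y u v : (forall t, continuous h t) ->
  ex_RInt (fun t => Sp M a (y - 1 - t) * h t) u v.
Proof. intros Hh. apply (@ex_RInt_continuous R_CompleteNormedModule). intros; apply cont_integrand; auto. Qed.

Lemma exRInt_integrand' M a h y u v : (forall t, continuous h t) ->
  ex_RInt (fun t => dSp M a (y - 1 - t) * h t) u v.
Proof. intros Hh. apply (@ex_RInt_continuous R_CompleteNormedModule). intros; apply cont_integrand'; auto. Qed.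

Lemma Derive_f M a h u t :
  Derive (fun z => Sp M a (z - 1 - t) * h t) u = dSp M a (u - 1 - t) * h t.
Proof.
  apply is_derive_unique.
  apply (is_derive_ext (fun z => h t * Sp M a (z - 1 - t))). intros; apply Rmult_comm.
  replace (dSp M a (u - 1 - t) * h t) with (h t * dSp M a (u - 1 - t)) by ring.
  apply is_derive_scal. apply Sp_comp_u.
Qed.

Lemma cont2d M a h x t : (forall t, continuous h t) ->
  continuity_2d_pt (fun u v => Derive (fun z => Sp M a (z - 1 - v) * h v) u) x t.
Proof.
  intros Hh.
  apply continuity_2d_pt_ext with (f := fun u v => dSp M a (u - 1 - v) * h v).
  { intros; symmetry; apply Derive_f. }
  apply continuity_2d_pt_mult.
  - apply (continuity_1d_2d_pt_comp (dSp M a) (fun u v => u - 1 - v)).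
    apply cont_pt, cont_dSp.
    apply continuity_2d_pt_minus. apply continuity_2d_pt_minus.
    apply continuity_2d_pt_id1. apply continuity_2d_pt_const. apply continuity_2d_pt_id2.
  - apply (continuity_1d_2d_pt_comp h (fun u v => v)). apply cont_pt, Hh.
    apply continuity_2d_pt_id2.
Qed.

Lemma Gg_deriv_param M a h x : (forall t, continuous h t) ->
  is_derive (Gg M a h) x (RInt (fun t => dSp M a (x - 1 - t) * h t) (-1) x + Sp M a (-1) * h x).
Proof.
  intros Hh.
  pose proof (is_derive_RInt_param_bound_comp_aux3 (fun u t => Sp M a (u - 1 - t) * h t) (-1)
     (fun y => y) x 1) as H.
  assert (E : forall t, Derive (fun u => Sp M a (u - 1 - t) * h t) x = dSp M a (x - 1 - t) * h t).
  { intros; apply Derive_f. }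
  assert (H1 : is_derive (fun x0 : R => RInt (fun t : R => Sp M a (x0 - 1 - t) * h t) (-1) x0) x
            (RInt (fun t : R => Derive (fun u : R => Sp M a (u - 1 - t) * h t) x) (-1) x +
             Sp M a (x - 1 - x) * h x * 1)).
  { apply H; clear H.
  - apply filter_forall. intros; apply exRInt_integrand; auto.
  - exists (mkposreal 1 Rlt_0_1). apply filter_forall. intros; apply exRInt_integrand; auto.
  - apply (@is_derive_id R_AbsRing).
  - exists (mkposreal 1 Rlt_0_1). apply filter_forall. intros x0 t _.
    eexists. apply (is_derive_ext (fun z => h t * Sp M a (z - 1 - t))). intros; apply Rmult_comm.
    apply is_derive_scal. apply Sp_comp_u.
  - intros; apply cont2d; auto.
  - exists (mkposreal 1 Rlt_0_1). intros; apply cont2d; auto.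
  - apply cont_pt. apply cont_integrand; auto. }
  unfold Gg. rewrite (RInt_ext _ (fun t => dSp M a (x - 1 - t) * h t)) in H1.
  2: intros; apply E.
  replace (x - 1 - x) with (-1) in H1 by ring. rewrite Rmult_1_r in H1. exact H1.
Qed.

Lemma ibp M a n x :
  RInt (fun t => dSp M a (x - 1 - t) * Tp n t) (-1) x =
  - Sp M a (-1) * Tp n x + Sp M a x * (-1) ^ n + Gg M a (dTp n) x.
Proof.
  assert (HD : forall t, is_derive (fun t => - (Sp M a (x - 1 - t) * Tp n t)) t
                 (dSp M a (x - 1 - t) * Tp n t - Sp M a (x - 1 - t) * dTp n t)).
  { intros t.
    pose proof (is_derive_mult _ _ t _ _ (Sp_comp_t M a x t) (Tp_deriv n t) Rmult_comm) as H.
    pose proof (is_derive_opp _ _ _ H) as H'.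
    replace (dSp M a (x - 1 - t) * Tp n t - Sp M a (x - 1 - t) * dTp n t) with
      (opp (plus (mult (- dSp M a (x - 1 - t)) (Tp n t)) (mult (Sp M a (x - 1 - t)) (dTp n t)))).
    2: unfold opp, plus, mult; simpl; ring.
    refine (is_derive_ext _ _ _ _ _ H'). intros; reflexivity. }
  assert (HI : is_RInt (fun t => dSp M a (x - 1 - t) * Tp n t - Sp M a (x - 1 - t) * dTp n t) (-1) x
     (minus (- (Sp M a (x - 1 - x) * Tp n x)) (- (Sp M a (x - 1 - -1) * Tp n (-1))))).
  { apply (is_RInt_derive (fun t => - (Sp M a (x - 1 - t) * Tp n t))).
    - intros; apply HD.
    - intros z _. apply (continuous_ext (fun t => minus (dSp M a (x - 1 - t) * Tp n t) (Sp M a (x - 1 - t) * dTp n t))).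
      intros; reflexivity.
      apply (@continuous_minus R_UniformSpace R_AbsRing R_NormedModule).
      apply cont_integrand'. apply cont_Tp. apply cont_integrand. apply cont_dTp. }
  apply (is_RInt_unique (V := R_CompleteNormedModule)) in HI.
  rewrite (RInt_minus (V := R_CompleteNormedModule) (fun t => dSp M a (x - 1 - t) * Tp n t) (fun t => Sp M a (x - 1 - t) * dTp n t)) in HI.
  2: apply exRInt_integrand'; apply cont_Tp.
  2: apply exRInt_integrand; apply cont_dTp.
  unfold Gg. unfold minus, plus, opp in HI; simpl in HI.
  replace (x - 1 - x) with (-1) in HI by ring.
  replace (x - 1 - -1) with x in HI by ring.
  rewrite Tp_m1 in HI. lra.
Qed.

Lemma G_deriv M a n x :
  is_derive (Gg M a (Tp n)) x (Sp M a x * (-1) ^ n + Gg M a (dTp n) x).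
Proof.
  pose proof (Gg_deriv_param M a (Tp n) x (cont_Tp n)) as H.
  rewrite ibp in H. replace (Sp M a x * (-1) ^ n + Gg M a (dTp n) x) with
   (- Sp M a (-1) * Tp n x + Sp M a x * (-1) ^ n + Gg M a (dTp n) x + Sp M a (-1) * Tp n x) by ring.
  exact H.
Qed.

Lemma Gg_lin M a h1 h2 al be y : (forall t, continuous h1 t) -> (forall t, continuous h2 t) ->
  Gg M a (fun t => al * h1 t + be * h2 t) y = al * Gg M a h1 y + be * Gg M a h2 y.
Proof.
  intros C1 C2. unfold Gg.
  rewrite (RInt_ext _ (fun t => plus (scal al (Sp M a (y - 1 - t) * h1 t)) (scal be (Sp M a (y - 1 - t) * h2 t)))).
  2: intros; unfold plus, scal; simpl; unfold mult; simpl; ring.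
  rewrite (RInt_plus (V := R_CompleteNormedModule)).
  rewrite !(RInt_scal (V := R_CompleteNormedModule)).
  unfold plus, scal; simpl; unfold mult; simpl; ring.
  apply exRInt_integrand; auto. apply exRInt_integrand; auto.
  apply (ex_RInt_scal (V := R_CompleteNormedModule)). apply exRInt_integrand; auto.
  apply (ex_RInt_scal (V := R_CompleteNormedModule)). apply exRInt_integrand; auto.
Qed.

Lemma Gg_zero M a y : Gg M a (dTp 0) y = 0.
Proof.
  unfold Gg. rewrite (RInt_ext _ (fun _ => 0)). 2: intros; simpl; rewrite dTp0; apply Rmult_0_r.
  rewrite (RInt_const (V := R_CompleteNormedModule)). unfold scal; simpl; unfold mult; simpl. ring.
Qed.

Ltac req := match goal with |- ?a = ?b => change (@eq R a b) end.

Definition dl (a b : nat) : R := if Nat.eqb a b then 1 else 0.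
Definition ext (L : nat) (r : nat -> R) (i : nat) : R := if Nat.leb i L then r i else 0.

Lemma sin_nPI n : sin (INR n * PI) = 0.
Proof.
  induction n as [|n IH]. simpl. rewrite Rmult_0_l. apply sin_0.
  rewrite S_INR, Rmult_plus_distr_r, Rmult_1_l, sin_plus, IH, sin_PI. ring.
Qed.

Lemma cont_gen (f : R -> R) x : (forall x, ex_derive f x) -> continuous f x.
Proof. intros H. apply (@ex_derive_continuous R_AbsRing R_NormedModule). apply H. Qed.

Lemma C_int m : RInt (fun t => cos (INR m * t)) 0 PI = if Nat.eqb m 0 then PI else 0.
Proof.
  destruct (Nat.eqb_spec m 0) as [->|Hm].
  - rewrite (RInt_ext (V := R_CompleteNormedModule) _ (fun _ => 1)).
    2: intros; simpl; rewrite Rmult_0_l; apply cos_0.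
    rewrite (RInt_const (V := R_CompleteNormedModule)). unfold scal; simpl; unfold mult; simpl. ring.
  - assert (HmR : INR m <> 0) by (apply not_0_INR; exact Hm).
    assert (H : is_RInt (fun t => cos (INR m * t)) 0 PI
       (minus (sin (INR m * PI) / INR m) (sin (INR m * 0) / INR m))).
    { apply (is_RInt_derive (V := R_CompleteNormedModule) (fun t => sin (INR m * t) / INR m)).
      + intros x _. auto_derive; auto. field. exact HmR.
      + intros x _. apply cont_gen. intros; auto_derive; auto. }
    rewrite (is_RInt_unique _ _ _ _ H).
    rewrite sin_nPI, Rmult_0_r, sin_0. unfold minus, plus, opp; simpl. field. exact HmR.
Qed.

Lemma ex_RInt_gen (f : R -> R) a b : (forall x, ex_derive f x) -> ex_RInt f a b.
Proof. intros H. apply (@ex_RInt_continuous R_CompleteNormedModule). intros; apply cont_gen; auto. Qed.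

Lemma RInt_lin2 (f g : R -> R) (al be : R) a b :
  (forall x, ex_derive f x) -> (forall x, ex_derive g x) ->
  RInt (fun t => al * f t + be * g t) a b = al * RInt f a b + be * RInt g a b.
Proof.
  intros Hf Hg.
  rewrite (RInt_ext (V := R_CompleteNormedModule) _ (fun t => plus (scal al (f t)) (scal be (g t)))).
  2: intros; reflexivity.
  rewrite (RInt_plus (V := R_CompleteNormedModule)).
  rewrite !(RInt_scal (V := R_CompleteNormedModule)). reflexivity.
  apply ex_RInt_gen; auto. apply ex_RInt_gen; auto.
  apply (ex_RInt_scal (V := R_CompleteNormedModule)). apply ex_RInt_gen; auto.
  apply (ex_RInt_scal (V := R_CompleteNormedModule)). apply ex_RInt_gen; auto.
Qed.

Lemma sinsin (x y : R) : sin x * sin y = / 2 * cos (x - y) + - / 2 * cos (x + y).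
Proof. rewrite cos_minus, cos_plus. field. Qed.

Lemma I_int k j : RInt (fun t => sin (INR k * t) * sin (INR j * t)) 0 PI =
  if Nat.eqb k j then (if Nat.eqb j 0 then 0 else PI / 2) else 0.
Proof.
  set (d := if Nat.leb j k then (k - j)%nat else (j - k)%nat).
  rewrite (RInt_ext (V := R_CompleteNormedModule) _
     (fun t => / 2 * cos (INR d * t) + (- / 2) * cos (INR (k + j) * t))).
  2: { intros t _.
       assert (E : cos (INR d * t) = cos (INR k * t - INR j * t)).
       { unfold d. destruct (Nat.leb_spec j k).
         - rewrite minus_INR by lia. f_equal. ring.
         - rewrite minus_INR by lia. rewrite <- cos_neg. f_equal. ring. }
       rewrite E, plus_INR, Rmult_plus_distr_r. apply sinsin. }
  rewrite RInt_lin2. 2,3: intros; auto_derive; auto.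
  rewrite !C_int.
  unfold d. destruct (Nat.eqb_spec k j) as [->|Hkj].
  - rewrite Nat.leb_refl, Nat.sub_diag. simpl.
    destruct (Nat.eqb_spec j 0) as [->|Hj]; simpl. req; field.
    destruct (Nat.eqb_spec (j + j) 0); [lia|]. req; field.
  - destruct (Nat.leb_spec j k).
    + destruct (Nat.eqb_spec (k - j) 0); [lia|].
      destruct (Nat.eqb_spec (k + j) 0); [lia|]. req; ring.
    + destruct (Nat.eqb_spec (j - k) 0); [lia|].
      destruct (Nat.eqb_spec (k + j) 0); [lia|]. req; ring.
Qed.

Lemma I_int1 k j : (1 <= j)%nat -> RInt (fun t => sin (INR k * t) * sin (INR j * t)) 0 PI = PI / 2 * dl k j.
Proof.
  intros Hj. rewrite I_int. unfold dl. destruct (Nat.eqb_spec k j); [|req; ring].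
  destruct (Nat.eqb_spec j 0); [lia|]. req; ring.
Qed.

Lemma J_int k j : (1 <= j)%nat ->
  RInt (fun t => cos (INR k * t) * sin t * sin (INR j * t)) 0 PI =
  PI / 4 * (dl k (j - 1) - dl k (j + 1) + dl k 0 * dl j 1).
Proof.
  intros Hj. destruct k as [|k].
  - rewrite (RInt_ext (V := R_CompleteNormedModule) _ (fun t => sin (INR 1 * t) * sin (INR j * t))).
    2: { intros; simpl. rewrite Rmult_0_l, cos_0, !Rmult_1_l. reflexivity. }
    rewrite I_int1 by exact Hj. unfold dl.
    destruct (Nat.eqb_spec 0 (j-1)); destruct (Nat.eqb_spec j 1); destruct (Nat.eqb_spec 1 j);
      destruct (Nat.eqb_spec 0 (j+1)); destruct (Nat.eqb_spec 0 0); try lia; req; field.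
  - rewrite (RInt_ext (V := R_CompleteNormedModule) _
      (fun t => / 2 * (sin (INR (S (S k)) * t) * sin (INR j * t)) + (- / 2) * (sin (INR k * t) * sin (INR j * t)))).
    2: { intros t _.
         replace (INR (S (S k)) * t) with (INR (S k) * t + t) by (rewrite !S_INR; ring).
         replace (INR k * t) with (INR (S k) * t - t) by (rewrite !S_INR; ring).
         rewrite sin_plus, sin_minus. req; field. }
    rewrite RInt_lin2. 2,3: intros; auto_derive; auto.
    rewrite !I_int1 by exact Hj. unfold dl.
    destruct (Nat.eqb_spec (S (S k)) j); destruct (Nat.eqb_spec k j);
    destruct (Nat.eqb_spec (S k) (j - 1)); destruct (Nat.eqb_spec (S k) (j + 1));
    destruct (Nat.eqb_spec (S k) 0); try lia; req; field.
Qed.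

Lemma RInt_sum (g : nat -> R -> R) K a b : (forall k x, ex_derive (g k) x) ->
  RInt (fun x => sum_f_R0 (fun k => g k x) K) a b = sum_f_R0 (fun k => RInt (g k) a b) K.
Proof.
  intros Hg. induction K as [|K IH].
  - simpl. reflexivity.
  - simpl. rewrite <- IH.
    rewrite (RInt_ext (V := R_CompleteNormedModule) _ (fun x => plus (sum_f_R0 (fun k => g k x) K) (g (S K) x))).
    2: intros; reflexivity.
    rewrite (RInt_plus (V := R_CompleteNormedModule)). reflexivity.
    apply (@ex_RInt_continuous R_CompleteNormedModule). intros z _.
    clear IH. induction K as [|K IH]. simpl. apply cont_gen. apply Hg.
    simpl. apply (continuous_ext (fun x => plus (sum_f_R0 (fun k => g k x) K) (g (S K) x))).
    intros; reflexivity. apply (@continuous_plus R_UniformSpace R_AbsRing R_NormedModule). exact IH.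
    apply cont_gen, Hg.
    apply ex_RInt_gen, Hg.
Qed.

Lemma sum_delta (g : nat -> R) K i :
  sum_f_R0 (fun k => g k * dl k i) K = ext K g i.
Proof.
  unfold ext. induction K as [|K IH].
  - simpl. unfold dl. destruct (Nat.eqb_spec 0 i); destruct (Nat.leb_spec i 0); try lia.
    subst; ring. ring.
  - simpl. rewrite IH. unfold dl.
    destruct (Nat.eqb_spec (S K) i); destruct (Nat.leb_spec i K); destruct (Nat.leb_spec i (S K)); try lia.
    subst; ring. ring. ring.
Qed.

Lemma sum_mult_r (f : nat -> R) K x : sum_f_R0 f K * x = sum_f_R0 (fun k => f k * x) K.
Proof. rewrite Rmult_comm. apply scal_sum. Qed.

Lemma sum_mult_l (f : nat -> R) K x : sum_f_R0 (fun k => x * f k) K = x * sum_f_R0 f K.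
Proof. rewrite scal_sum. apply sum_eq. intros; ring. Qed.

Lemma cos_in t : 0 < t < PI -> -1 < cos t < 1.
Proof.
  intros Ht. pose proof (sin_gt_0 t (proj1 Ht) (proj2 Ht)).
  pose proof (sin2_cos2 t). pose proof (COS_bound t). unfold Rsqr in *. nra.
Qed.

Lemma extract K L c r : (forall y, -1 < y < 1 -> dSp K c y = Sp L r y) ->
  forall j, (1 <= j)%nat -> INR j * ext K c j = (eps j * ext L r (j - 1) - ext L r (j + 1)) / 2.
Proof.
  intros H j Hj.
  assert (E : RInt (fun t => dSp K c (cos t) * sin t * sin (INR j * t)) 0 PI =
              RInt (fun t => Sp L r (cos t) * sin t * sin (INR j * t)) 0 PI).
  { apply RInt_ext. intros t Ht. rewrite Rmin_left, Rmax_right in Ht by (pose proof PI_RGT_0; lra).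
    rewrite H. reflexivity. apply cos_in. exact Ht. }
  rewrite (RInt_ext (V := R_CompleteNormedModule) _
     (fun t => sum_f_R0 (fun k => c k * INR k * (sin (INR k * t) * sin (INR j * t))) K)) in E.
  2: { intros t _. unfold dSp. rewrite Rmult_assoc, sum_mult_r. apply sum_eq. intros k _.
       rewrite !Rmult_assoc, <- (Rmult_assoc (dTp k (cos t))), dTp_sin. req; ring. }
  rewrite (RInt_ext (V := R_CompleteNormedModule) (fun t => Sp L r (cos t) * sin t * sin (INR j * t))
     (fun t => sum_f_R0 (fun k => r k * (cos (INR k * t) * sin t * sin (INR j * t))) L)) in E.
  2: { intros t _. unfold Sp. rewrite Rmult_assoc, sum_mult_r. apply sum_eq. intros k _.
       rewrite Tp_cos. req; ring. }
  rewrite !RInt_sum in E. 2,3: intros; auto_derive; auto.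
  rewrite (sum_eq _ (fun k => (c k * INR k * (PI / 2)) * dl k j)) in E.
  2: { intros k _. cbv beta. rewrite (RInt_ext (V := R_CompleteNormedModule) _
         (fun t => c k * INR k * (sin (INR k * t) * sin (INR j * t)) + 0 * 0)).
       2: intros; req; ring.
       rewrite RInt_lin2. 2,3: intros; auto_derive; auto.
       rewrite I_int1 by exact Hj. req; ring. }
  rewrite (sum_eq (fun k => RInt (fun x : R => r k * (cos (INR k * x) * sin x * sin (INR j * x))) 0 PI)
     (fun k => (r k * (PI / 4)) * dl k (j - 1) - (r k * (PI / 4)) * dl k (j + 1)
                             + dl j 1 * ((r k * (PI / 4)) * dl k 0))) in E.
  2: { intros k _. cbv beta. rewrite (RInt_ext (V := R_CompleteNormedModule) _
         (fun t => r k * (cos (INR k * t) * sin t * sin (INR j * t)) + 0 * 0)).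
       2: intros; req; ring.
       rewrite RInt_lin2. 2,3: intros; auto_derive; auto.
       rewrite J_int by exact Hj. req; ring. }
  rewrite sum_plus, minus_sum, sum_mult_l, !sum_delta in E.
  assert (ext K (fun k => c k * INR k * (PI / 2)) j = INR j * ext K c j * (PI / 2)) as E1.
  { unfold ext. destruct (Nat.leb j K); ring. }
  assert (forall i, ext L (fun k => r k * (PI / 4)) i = ext L r i * (PI / 4)) as E2.
  { intros i. unfold ext. destruct (Nat.leb i L); ring. }
  rewrite E1, !E2 in E.
  assert (Heps : eps j * ext L r (j - 1) = ext L r (j - 1) + dl j 1 * ext L r 0).
  { unfold eps, dl. destruct (Nat.eqb_spec j 1). subst. simpl. ring. ring. }
  rewrite Heps. pose proof PI_RGT_0.
  apply (Rmult_eq_reg_r (PI / 4)). 2: lra.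
  replace ((ext L r (j - 1) + dl j 1 * ext L r 0 - ext L r (j + 1)) / 2 * (PI / 4)) with
    ((ext L r (j - 1) * (PI / 4) - ext L r (j + 1) * (PI / 4) + dl j 1 * (ext L r 0 * (PI / 4))) / 2) by field.
  rewrite <- E. field.
Qed.

Lemma fM_Sp M a x : -1 <= x <= 1 -> fM M a x = Sp M a x.
Proof.
  intros Hx. unfold fM, Sp. apply sum_eq. intros. rewrite T_Tp by exact Hx. reflexivity.
Qed.

Lemma stepA M N a Rc
  (HR : forall n : nat, (n <= N)%nat -> forall y : R, -1 <= y <= 1 ->
        Rtilde M a n y = sum_f_R0 (fun k => Rc k n * T k y) (M + N + 1))
  n y : (n <= N)%nat -> -1 <= y <= 1 ->
  Gg M a (Tp n) y = Sp (M + N + 1) (fun k => Rc k n) y.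
Proof.
  intros Hn Hy.
  assert (E : Rtilde M a n y = Gg M a (Tp n) y).
  { unfold Rtilde, Gg. apply RInt_ext. intros t Ht.
    rewrite Rmin_left, Rmax_right in Ht by lra.
    rewrite fM_Sp by lra. rewrite T_Tp by lra. reflexivity. }
  rewrite <- E, HR by assumption. unfold Sp. apply sum_eq. intros.
  rewrite T_Tp by exact Hy. reflexivity.
Qed.

Lemma stepB M N a Rc
  (HR : forall n : nat, (n <= N)%nat -> forall y : R, -1 <= y <= 1 ->
        Rtilde M a n y = sum_f_R0 (fun k => Rc k n * T k y) (M + N + 1))
  n y : (n <= N)%nat -> -1 < y < 1 ->
  dSp (M + N + 1) (fun k => Rc k n) y = Sp M a y * (-1) ^ n + Gg M a (dTp n) y.
Proof.
  intros Hn Hy.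
  pose proof (G_deriv M a n y) as H.
  apply (is_derive_ext_loc _ (Sp (M + N + 1) (fun k => Rc k n))) in H.
  - pose proof (Sp_deriv (M + N + 1) (fun k => Rc k n) y) as H2.
    apply is_derive_unique in H. apply is_derive_unique in H2. rewrite <- H2, H. reflexivity.
  - apply (locally_interval _ y (-1) 1); simpl; try lra.
    intros z Hz1 Hz2. apply (stepA M N a Rc HR); auto. lra.
Qed.

Lemma stepC M N a Rc
  (HR : forall n : nat, (n <= N)%nat -> forall y : R, -1 <= y <= 1 ->
        Rtilde M a n y = sum_f_R0 (fun k => Rc k n * T k y) (M + N + 1))
  y : -1 < y < 1 -> Sp M a y = dSp (M + N + 1) (fun k => Rc k 0%nat) y.
Proof.
  intros Hy. rewrite (stepB M N a Rc HR) by (auto; lia). rewrite Gg_zero. simpl. ring.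
Qed.

Lemma Gg_ext M a h1 h2 y : (forall t, h1 t = h2 t) -> Gg M a h1 y = Gg M a h2 y.
Proof. intros H. unfold Gg. apply RInt_ext. intros; rewrite H; reflexivity. Qed.

Lemma dSp_lin K c1 c2 s y : dSp K (fun k => c1 k + s * c2 k) y = dSp K c1 y + s * dSp K c2 y.
Proof.
  unfold dSp. rewrite scal_sum, <- sum_plus. apply sum_eq. intros; ring.
Qed.

Lemma Sp_scal K c s y : Sp K (fun k => s * c k) y = s * Sp K c y.
Proof. unfold Sp. rewrite scal_sum. apply sum_eq. intros; ring. Qed.

Definition Dc (Rc : nat -> nat -> R) n m al k : R :=
  Rc k (S n) + (- (-1) ^ (S n) + al * (-1) ^ m) * Rc k 0%nat + (- al) * Rc k m.

Lemma coef_rel M N a Rc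
  (HR : forall n : nat, (n <= N)%nat -> forall y : R, -1 <= y <= 1 ->
        Rtilde M a n y = sum_f_R0 (fun k => Rc k n * T k y) (M + N + 1))
  n m al be : (S n <= N)%nat -> (m <= N)%nat ->
  (forall t, dTp (S n) t = al * dTp m t + be * Tp n t) ->
  forall j, (1 <= j)%nat ->
  INR j * ext (M + N + 1) (Dc Rc n m al) j =
  (eps j * ext (M + N + 1) (fun k => be * Rc k n) (j - 1) - ext (M + N + 1) (fun k => be * Rc k n) (j + 1)) / 2.
Proof.
  intros Hn Hm Hrel. apply extract.
  intros y Hy. unfold Dc.
  rewrite dSp_lin, dSp_lin, Sp_scal.
  rewrite (stepB M N a Rc HR (S n)) by (auto; lia).
  rewrite (stepB M N a Rc HR m) by (auto; lia).
  rewrite <- (stepC M N a Rc HR) by auto.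
  rewrite (Gg_ext M a _ (fun t => al * dTp m t + be * Tp n t)) by exact Hrel.
  rewrite Gg_lin. 2: apply cont_dTp. 2: apply cont_Tp.
  rewrite (stepA M N a Rc HR n) by (lia || lra).
  ring.
Qed.

Lemma ext_in L r i : (i <= L)%nat -> ext L r i = r i.
Proof. intros H. unfold ext. apply Nat.leb_le in H. rewrite H. reflexivity. Qed.

Lemma ext_zero L r i : ((i <= L)%nat -> r i = 0) -> ext L r i = 0.
Proof. intros H. unfold ext. destruct (Nat.leb_spec i L); auto. Qed.

Lemma sum_trunc g p d : (forall i, (p < i)%nat -> (i <= p + d)%nat -> g i = 0) ->
  sum_f_R0 g (p + d) = sum_f_R0 g p.
Proof.
  induction d as [|d IH]; intros H.
  - rewrite Nat.add_0_r. reflexivity.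
  - rewrite Nat.add_succ_r. simpl. rewrite IH. rewrite H by lia. ring.
    intros; apply H; lia.
Qed.

Lemma rel_exists n : exists m al be, (m <= n)%nat /\ (m <= 1 \/ m = n - 1)%nat /\
  forall t, dTp (S n) t = al * dTp m t + be * Tp n t.
Proof.
  destruct n as [|[|n]].
  - exists 0%nat, 0, 1. split; [lia|split; [lia|]]. intros; rewrite dTp_rel0; ring.
  - exists 0%nat, 0, 4. split; [lia|split; [lia|]]. intros; rewrite dTp_rel1; ring.
  - exists (S (S n) - 1)%nat, ((INR (S (S n)) + 1) / (INR (S (S n)) - 1)), (2 * (INR (S (S n)) + 1)).
    split; [lia|split; [lia|]]. intros; apply dTp_rel; lia.
Qed.

Lemma INR_nz k : (1 <= k)%nat -> INR k <> 0.
Proof. intros H. apply not_0_INR. lia. Qed.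

Theorem theorem3p3 (M N : nat) (a : nat -> R) (Rc : nat -> nat -> R)
  (HR : forall n : nat, (n <= N)%nat ->
        forall y : R, -1 <= y <= 1 ->
        Rtilde M a n y = sum_f_R0 (fun k => Rc k n * T k y) (M + N + 1))
  (Hlast : forall n : nat, (n <= N)%nat -> Rc (M + N + 2)%nat n = 0) :
  (forall k : nat, (1 <= k <= M + N)%nat ->
     ((1 <= N)%nat ->
        Rc k 1%nat = - Rc k 0%nat + eps k / (2 * INR k) * Rc (k - 1)%nat 0%nat
                     - 1 / (2 * INR k) * Rc (k + 1)%nat 0%nat) /\
     ((2 <= N)%nat ->
        Rc k 2%nat = Rc k 0%nat + 2 * eps k / INR k * Rc (k - 1)%nat 1%nat
                     - 2 / INR k * Rc (k + 1)%nat 1%nat) /\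
     (forall n : nat, (2 <= n <= N - 1)%nat ->
        Rc k (n + 1)%nat =
          2 * (-1) ^ n / (INR n - 1) * Rc k 0%nat
          + (INR n + 1) / (INR n - 1) * Rc k (n - 1)%nat
          + eps k * (INR n + 1) / INR k * Rc (k - 1)%nat n
          - (INR n + 1) / INR k * Rc (k + 1)%nat n)) /\
  (forall n : nat, (1 <= n <= N)%nat ->
     Rc 0%nat n = sum_f_R0 (fun i => (-1) ^ (i + 2) * Rc (i + 1)%nat n) (M + n)).
Proof.
  split.
  - intros k Hk. pose proof (INR_nz k ltac:(lia)) as Hk0.
    split; [|split].
    + intros HN.
      pose proof (coef_rel M N a Rc HR 0 0 0 1 ltac:(lia) ltac:(lia)
        ltac:(intros; rewrite dTp_rel0; ring) k ltac:(lia)) as H.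
      rewrite !ext_in in H by lia.
      assert (HD : Dc Rc 0 0 0 k = Rc k 1%nat + Rc k 0%nat) by (unfold Dc; simpl; ring).
      rewrite HD in H.
      replace (Rc k 1%nat) with ((INR k * (Rc k 1%nat + Rc k 0%nat)) / INR k - Rc k 0%nat) by (field; exact Hk0).
      rewrite H. field. exact Hk0.
    + intros HN.
      pose proof (coef_rel M N a Rc HR 1 0 0 4 ltac:(lia) ltac:(lia)
        ltac:(intros; rewrite dTp_rel1; ring) k ltac:(lia)) as H.
      rewrite !ext_in in H by lia.
      assert (HD : Dc Rc 1 0 0 k = Rc k 2%nat - Rc k 0%nat) by (unfold Dc; simpl; ring).
      rewrite HD in H.
      replace (Rc k 2%nat) with ((INR k * (Rc k 2%nat - Rc k 0%nat)) / INR k + Rc k 0%nat) by (field; exact Hk0).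
      rewrite H. field. exact Hk0.
    + intros n Hn.
      set (al := (INR n + 1) / (INR n - 1)).
      pose proof (coef_rel M N a Rc HR n (n - 1) al (2 * (INR n + 1)) ltac:(lia) ltac:(lia)
        ltac:(intros; apply dTp_rel; lia) k ltac:(lia)) as H.
      rewrite !ext_in in H by lia.
      assert (Hn1 : INR n - 1 <> 0).
      { assert (INR n >= 2). { replace 2 with (INR 2) by (simpl; ring). apply Rle_ge, le_INR. lia. } lra. }
      assert (Hp1 : (-1) ^ (S n) = - (-1) ^ n) by (simpl; ring).
      assert (Hp2 : (-1) ^ (n - 1) = - (-1) ^ n).
      { replace n with (S (n - 1)) at 2 by lia. simpl; ring. }
      assert (HD : Dc Rc n (n - 1) al k = Rc k (n + 1)%nat + (-1) ^ n * (1 - al) * Rc k 0%nat - al * Rc k (n - 1)%nat).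
      { unfold Dc. rewrite Hp1, Hp2, Nat.add_1_r. ring. }
      rewrite HD in H.
      replace (Rc k (n + 1)%nat) with
        ((INR k * (Rc k (n + 1)%nat + (-1) ^ n * (1 - al) * Rc k 0%nat - al * Rc k (n - 1)%nat)) / INR k
          - (-1) ^ n * (1 - al) * Rc k 0%nat + al * Rc k (n - 1)%nat) by (field; exact Hk0).
      rewrite H. unfold al. field. split; assumption.
  -
    assert (V : forall n, (n <= N)%nat -> forall k, (M + n + 1 < k)%nat -> (k <= M + N + 2)%nat -> Rc k n = 0).
    { intros n. induction n as [n IH] using lt_wf_ind. intros Hn k Hk1 Hk2.
      destruct (Nat.eq_dec k (M + N + 2)) as [->|Hne]. apply Hlast; exact Hn.
      pose proof (INR_nz k ltac:(lia)) as Hk0.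
      destruct n as [|n].
      - pose proof (extract (M + N + 1) M (fun k => Rc k 0%nat) a) as H.
        specialize (H ltac:(intros y Hy; symmetry; apply (stepC M N a Rc HR y Hy)) k ltac:(lia)).
        rewrite ext_in in H by lia. rewrite !(ext_zero M a) in H by lia.
        apply (Rmult_eq_reg_l (INR k)); [|exact Hk0]. rewrite H. field.
      - destruct (rel_exists n) as (m & al & be & Hm & Hm' & Hrel).
        pose proof (coef_rel M N a Rc HR n m al be ltac:(lia) ltac:(lia) Hrel k ltac:(lia)) as H.
        rewrite ext_in in H by lia.
        rewrite (ext_zero _ _ (k - 1)) in H.
        2: { intros. rewrite (IH n) by lia. ring. }
        rewrite (ext_zero _ _ (k + 1)) in H.
        2: { intros. rewrite (IH n) by lia. ring. }
        unfold Dc in H. rewrite (IH 0%nat) in H by lia. rewrite (IH m) in H by lia.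
        apply (Rmult_eq_reg_l (INR k)); [|exact Hk0].
        replace (INR k * Rc k (S n)) with (INR k * (Rc k (S n) + (- (-1) ^ S n + al * (-1) ^ m) * 0 + - al * 0)) by ring.
        rewrite H. field. }
    intros n Hn.
    assert (H0 : Sp (M + N + 1) (fun k => Rc k n) (-1) = 0).
    { rewrite <- (stepA M N a Rc HR) by (lia || lra). unfold Gg. rewrite RInt_point. reflexivity. }
    unfold Sp in H0. rewrite decomp_sum in H0 by lia.
    replace (Init.Nat.pred (M + N + 1)) with ((M + n) + (N - n))%nat in H0 by lia.
    rewrite sum_trunc in H0.
    2: { intros i Hi1 Hi2. rewrite (V n) by lia. ring. }
    rewrite (sum_eq _ (fun i => -1 * (Rc (S i) n * Tp (S i) (-1)))).
    2: { intros i _. rewrite Tp_m1. replace (i + 2)%nat with (S (S i)) by lia.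
         replace (i + 1)%nat with (S i) by lia. simpl. ring. }
    rewrite sum_mult_l. change (Tp 0 (-1)) with 1 in H0. lra.
Qed.
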